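(* Let $\mathbb{F}$ be a field, let $U$ and $U'$ be finite-dimensional $\mathbb{F}$-vector spaces with $\dim U>1$, and let $b$ be a symplectic form on $U'$. Let $\mathcal{V}\subseteq \operatorname{Hom}_{\mathbb{F}}(U,U')$ be a linear subspace such that the range of every element of $\mathcal{V}$ is totally $b$-singular. Then $$\dim\mathcal{V}\le \frac{(\dim U)(\dim U')}{2}.$$ Moreover, if $\dim U>2$ and $\dim\mathcal{V}=\frac{(\dim U)(\dim U')}{2}$, then $\mathcal{V}=\operatorname{Hom}_{\mathbb{F}}(U,\mathcal{L})$ for some Lagrangian $\mathcal{L}$ of $(U',b)$.
   Context: A symplectic form is a non-degenerate alternating bilinear form ($b(x,x)=0$ for all $x$). A subspace $W$ is totally $b$-singular if $b(x,y)=0$ for all $x,y\in W$. A Lagrangian of $(U',b)$ is a totally $b$-singular subspace of $U'$ of dimension $\frac{\dim U'}{2}$. *)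

(* Defs.v *)
From HB Require Import structures.
From mathcomp Require Import all_boot all_order all_algebra.
Set Implicit Arguments. Unset Strict Implicit. Unset Printing Implicit Defensive.
Import GRing.Theory.
Local Open Scope ring_scope.

(* Coordinatisation: U = 'rV[F]_n, U' = 'rV[F]_m; a linear map U -> U' is a
   matrix A : 'M[F]_(n, m) acting by u |-> u *m A, whose range is the row space
   of A. *)

Definition bform (F : fieldType) (m : nat) (B : 'M[F]_m) (x y : 'rV[F]_m) : F :=
  (x *m B *m y^T) 0 0.

Definition alternating (F : fieldType) (m : nat) (B : 'M[F]_m) : Prop :=
  forall x, bform B x x = 0.

Definition nondegenerate (F : fieldType) (m : nat) (B : 'M[F]_m) : Prop :=
  forall x, (forall y, bform B x y = 0) -> x = 0.

Definition symplectic (F : fieldType) (m : nat) (B : 'M[F]_m) : Prop :=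
  alternating B /\ nondegenerate B.

Definition totally_singular (F : fieldType) (m k : nat) (B : 'M[F]_m)
  (W : 'M[F]_(k, m)) : Prop :=
  forall x y : 'rV[F]_m, (x <= W)%MS -> (y <= W)%MS -> bform B x y = 0.

Definition lagrangian (F : fieldType) (m : nat) (B : 'M[F]_m) (L : 'M[F]_m) : Prop :=
  totally_singular B L /\ (\rank L * 2 = m)%N.

(* Main.v *)
Require Import Defs.
From HB Require Import structures.
From mathcomp Require Import all_boot all_order all_algebra.
From mathcomp Require Import zify.
Set Implicit Arguments. Unset Strict Implicit. Unset Printing Implicit Defensive.
Import GRing.Theory.
Local Open Scope ring_scope.

Section Aux.
Variables (F : fieldType) (m : nat) (B : 'M[F]_m).

Lemma bformDl x y z : bform B (x + y) z = bform B x z + bform B y z.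
Proof. by rewrite /bform !mulmxDl mxE. Qed.
Lemma bformDr x y z : bform B x (y + z) = bform B x y + bform B x z.
Proof. by rewrite /bform linearD /= mulmxDr mxE. Qed.
Lemma bformZl a x z : bform B (a *: x) z = a * bform B x z.
Proof. by rewrite /bform -!scalemxAl mxE. Qed.
Lemma bform0l z : bform B 0 z = 0.
Proof. by rewrite /bform !mul0mx mxE. Qed.
Lemma bform0r z : bform B z 0 = 0.
Proof. by rewrite /bform trmx0 mulmx0 mxE. Qed.

Definition vmat (W : {vspace 'rV[F]_m}) : 'M[F]_(\dim W, m) :=
  \matrix_(l < \dim W) (vbasis W)`_l.

Lemma vmat_mem (W : {vspace 'rV[F]_m}) (x : 'rV[F]_m) : x \in W -> (x <= vmat W)%MS.
Proof.
move=> /coord_vbasis ->; apply: summx_sub => l _; apply: scalemx_sub.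
have -> : (vbasis W)`_l = row l (vmat W) by rewrite rowK.
exact: row_sub.
Qed.

Lemma vmat_sub (W : {vspace 'rV[F]_m}) (x : 'rV[F]_m) : (x <= vmat W)%MS -> x \in W.
Proof.
move=> /submxP [D ->]; rewrite mulmx_sum_row; apply: memv_suml => l _.
apply: memvZ; rewrite rowK; apply: vbasis_mem; apply: mem_nth.
by rewrite size_tuple.
Qed.

Lemma vmat_rank (W : {vspace 'rV[F]_m}) : \rank (vmat W) = \dim W.
Proof.
apply/eqP; apply: inj_row_free => v; rewrite mulmx_sum_row => H.
apply/rowP => l; rewrite mxE.
move/freeP: (basis_free (vbasisP W)) => /(_ (fun i => v 0 i)); apply.
by rewrite -{}[RHS]H; apply: eq_bigr => i _; rewrite rowK.
Qed.

Definition orthb (W Z : {vspace 'rV[F]_m}) :=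
  forall x y, x \in W -> y \in Z -> bform B x y = 0.

Lemma orth_dim (W Z : {vspace 'rV[F]_m}) : Defs.nondegenerate B -> orthb W Z -> (\dim W + \dim Z <= m)%N.
Proof.
move=> nd o.
have fB : row_free B.
  apply: inj_row_free => v vB; apply: nd => y.
  by rewrite /bform vB mul0mx mxE.
set M1 := vmat W; set M2 := vmat Z.
have H0 : M2 *m (M1 *m B)^T = 0.
  apply/matrixP => p q.
  have E := o _ _ (vmat_sub (row_sub q M1)) (vmat_sub (row_sub p M2)).
  transitivity (bform B (row q M1) (row p M2)); last by rewrite E mxE.
  rewrite mxE /bform mxE; apply: eq_bigr => j _.
  rewrite !mxE mulrC; congr (_ * _); apply: eq_bigr => k _; rewrite !mxE //.
have /mxrankS : (M2 <= kermx (M1 *m B)^T)%MS by apply/sub_kermxP.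
rewrite mxrank_ker mxrank_tr mxrankMfree // !vmat_rank.
have := rank_leq_col M1; rewrite vmat_rank; lia.
Qed.
End Aux.

Section Main.
Variables (F : fieldType) (n m : nat) (B : 'M[F]_m).

Definition emb (i : 'I_n) (x : 'rV[F]_m) : 'M[F]_(n, m) :=
  (delta_mx i 0 : 'M[F]_(n, 1)) *m x.
Definition embL (i : 'I_n) : 'Hom('rV[F]_m, 'M[F]_(n, m)) :=
  linfun (mulmx (delta_mx i 0 : 'M[F]_(n, 1))).
Definition delL (i : 'I_n) : 'Hom('M[F]_(n, m), 'M[F]_(n, m)) :=
  linfun (mulmx (1%:M - delta_mx i i : 'M[F]_n)).
Definition rowL (i : 'I_n) : 'Hom('M[F]_(n, m), 'rV[F]_m) :=
  linfun (mulmx (delta_mx 0 i : 'M[F]_(1, n))).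

Lemma embLE i x : embL i x = emb i x.
Proof. by rewrite lfunE. Qed.
Lemma rowLE i A : rowL i A = row i A.
Proof. by rewrite lfunE /= rowE. Qed.

Lemma row_emb k i x : row k (emb i x) = if k == i then x else 0.
Proof.
apply/rowP => j; rewrite !mxE big_ord1 !mxE.
by case: (k == i); rewrite ?mul1r ?mul0r ?mxE.
Qed.

Lemma delLE i A : delL i A = A - emb i (row i A).
Proof.
rewrite lfunE /= mulmxBl mul1mx /emb rowE mulmxA mul_delta_mx //.
Qed.

Lemma row_del k i A : row k (delL i A) = if k == i then 0 else row k A.
Proof.
rewrite delLE linearB /= row_emb.
by case: eqP => [->|]; rewrite ?subrr ?subr0.
Qed.

Definition K (V : {vspace 'M[F]_(n, m)}) i := (embL i @^-1: V)%VS.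

Lemma memK V i x : (x \in K V i) = (emb i x \in V).
Proof. by rewrite -memv_preim embLE. Qed.

Lemma emb_rows i A : (forall k, k != i -> row k A = 0) -> A = emb i (row i A).
Proof.
move=> H; apply/row_matrixP => k; rewrite row_emb.
by case: eqP => [->|/eqP /H].
Qed.

Lemma sum_emb A : A = \sum_i emb i (row i A).
Proof.
apply/row_matrixP => k; rewrite linear_sum /=.
rewrite (bigD1 k) //= row_emb eqxx big1 ?addr0 // => i ik.
by rewrite row_emb eq_sym (negbTE ik).
Qed.

Definition sing (V : {vspace 'M[F]_(n, m)}) :=
  forall A, A \in V -> forall p q, bform B (row p A) (row q A) = 0.
Definition supp (S : {set 'I_n}) (V : {vspace 'M[F]_(n, m)}) :=
  forall A, A \in V -> forall k, k \notin S -> row k A = 0.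

Lemma polar V A C p q : sing V -> A \in V -> C \in V ->
  bform B (row p A) (row q C) + bform B (row p C) (row q A) = 0.
Proof.
move=> sV AV CV; have := sV _ (memvD AV CV) p q.
rewrite !linearD /= !bformDl !bformDr (sV _ AV) (sV _ CV) add0r addr0.
by rewrite addrC.
Qed.

Lemma polar_emb V A i j y : sing V -> A \in V -> j != i -> y \in K V j ->
  bform B (row i A) y = 0.
Proof.
move=> sV AV ji; rewrite memK => yV.
have := polar i j sV AV yV; rewrite !row_emb eqxx eq_sym (negbTE ji).
by rewrite bform0l addr0.
Qed.

Lemma dim_img_le (aT rT : vectType F) (f : 'Hom(aT, rT)) U :
  (\dim (f @: U) <= \dim U)%N.
Proof. by rewrite -(limg_ker_dim f U) leq_addl. Qed.

Lemma dim_split V i : (\dim V <= \dim (K V i) + \dim (delL i @: V))%N.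
Proof.
rewrite -(limg_ker_dim (delL i) V) leq_add2r.
apply: leq_trans (dim_img_le (embL i) _); apply: dimvS; apply/subvP => A.
move=> /memv_capP [AV]; rewrite memv_ker delLE subr_eq0 => /eqP EA.
rewrite EA -embLE; apply: memv_img; rewrite memK -EA //.
Qed.

Lemma sing_del V i : sing V -> sing (delL i @: V).
Proof.
move=> sV _ /memv_imgP [A AV ->] p q; rewrite !row_del.
by case: (p == i); case: (q == i); rewrite ?bform0l ?bform0r ?sV.
Qed.

Lemma supp_del S V i : supp S V -> supp (S :\ i) (delL i @: V).
Proof.
move=> sV _ /memv_imgP [A AV ->] k; rewrite in_setD1 negb_and negbK row_del.
by case: (k == i) => //= /sV ->.
Qed.

Lemma arith_step (b a d k mm : nat) : (b * 2 <= mm)%N -> (a <= b + d)%N ->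
  (d * 2 <= k.+2 * mm)%N -> (a * 2 <= k.+3 * mm)%N.
Proof. rewrite (mulSn k.+2); move: (k.+2 * mm)%N => t; lia. Qed.

Lemma arith2 (a b mm : nat) : (a + b <= mm)%N -> (mm < a * 2)%N -> (mm < b * 2)%N -> False.
Proof. lia. Qed.

Hypothesis nd : Defs.nondegenerate B.

Lemma orthK V i j : sing V -> i != j -> orthb B (K V i) (K V j).
Proof.
move=> sV ij x y; rewrite memK => xV yK.
have ji : j != i by rewrite eq_sym.
by have := polar_emb sV xV ji yK; rewrite row_emb eqxx.
Qed.

Lemma G k : forall (S : {set 'I_n}) (V : {vspace 'M[F]_(n, m)}), #|S| = k.+2 -> sing V -> supp S V ->
  (\dim V * 2 <= #|S| * m)%N.
Proof.
elim: k => [|k IH] S V cS sV pV.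
  have /cards2P [i1 [i2 [i12 ES]]] : #|S| == 2 by rewrite cS.
  have W1 := dim_split V i2.
  set W := (rowL i1 @: V)%VS.
  have o : orthb B W (K V i2).
    move=> _ y /memv_imgP [A AV ->] yK; rewrite rowLE.
    by apply: polar_emb sV AV _ yK; rewrite eq_sym.
  have := orth_dim nd o.
  have : (\dim (delL i2 @: V) <= \dim W)%N.
    apply: leq_trans (dim_img_le (embL i1) _); apply: dimvS; apply/subvP.
    move=> _ /memv_imgP [A AV ->].
    rewrite (@emb_rows i1 (delL i2 A)) -?embLE.
      by apply: memv_img; rewrite row_del (negbTE i12) -rowLE memv_img.
    move=> k ki1; rewrite row_del; case: eqP => // /eqP ki2.
    by apply: (pV _ AV); rewrite ES !inE negb_or ki1 ki2.
  rewrite cS; move=> h1 h2.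
  have : (\dim V <= m)%N.
    apply: leq_trans W1 _; apply: leq_trans h2; by rewrite [X in (_ <= X)%N]addnC leq_add2l.
  lia.
have /card_gt1P [i1 [i2 [i1S i2S i12]]] : (1 < #|S|)%N by rewrite cS.
have := orth_dim nd (orthK sV i12).
have key : forall i, i \in S -> (\dim (K V i) * 2 <= m)%N ->
    (\dim V * 2 <= #|S| * m)%N.
  move=> i iS Ki.
  have := IH (S :\ i) (delL i @: V)%VS.
  have := cardsD1 i S; rewrite iS cS add1n => [[c]].
  move=> /(_ (esym c) (sing_del (i:=i) sV) (supp_del (i:=i) pV)).
  have := dim_split V i; rewrite -c.
  move: Ki; apply: arith_step.
case: (leqP (\dim (K V i1) * 2) m) => [/(key _ i1S) //|h1].
case: (leqP (\dim (K V i2) * 2) m) => [/(key _ i2S) //|h2].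
by move=> h; exfalso; apply: (arith2 h h1 h2).
Qed.

Lemma arith3 (b d a nn mm : nat) : (0 < nn)%N -> (a * 2 = nn * mm)%N ->
  (a <= b + d)%N -> (d * 2 <= nn.-1 * mm)%N -> (mm <= b * 2)%N.
Proof. case: nn => // nn _ /=; rewrite mulSn; move: (nn * mm)%N => t; lia. Qed.

Lemma arith4 (s a b mm : nat) : (s + a <= mm)%N -> (mm <= a * 2)%N ->
  (mm <= b * 2)%N -> (s <= b)%N.
Proof. lia. Qed.

Lemma third : (2 < n)%N -> forall j k : 'I_n, exists i : 'I_n, (i != j) && (i != k).
Proof.
move=> n2 j k; case: (pickP (fun i : 'I_n => (i != j) && (i != k))) => [i Hi|H].
  by exists i.
have : ([set: 'I_n] \subset [set j; k]).
  apply/subsetP => i _; move: (H i); rewrite !inE => /negbT.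
  by rewrite negb_and !negbK.
move/subset_leq_card; rewrite cardsT card_ord cards2.
by case: (j != k) => /=; lia.
Qed.

Lemma Kbig V i : (2 < n)%N -> sing V -> (\dim V * 2 = n * m)%N ->
  (m <= \dim (K V i) * 2)%N.
Proof.
move=> n2 sV dV.
have c : #|[set~ i]| = (n - 3).+2 by rewrite cardsC1 card_ord; lia.
have pV : supp [set~ i] (delL i @: V).
  move=> _ /memv_imgP [A AV ->] k; rewrite !inE negbK row_del => ->; done.
have := G c (sing_del (i:=i) sV) pV; rewrite c.
have -> : (n - 3).+2 = n.-1 by lia.
apply: arith3 dV (dim_split V i); lia.
Qed.

Lemma orth_add V j k i : sing V -> j != i -> k != i ->
  orthb B (K V j + K V k)%VS (K V i).
Proof.
move=> sV ji ki _ y /memv_addP [x1 x1K [x2 x2K ->]] yK.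
rewrite bformDl.
have E1 : emb j x1 \in V by rewrite -memK.
have E2 : emb k x2 \in V by rewrite -memK.
have ij : i != j by rewrite eq_sym.
have ik : i != k by rewrite eq_sym.
have := polar_emb sV E1 ij yK; rewrite row_emb eqxx => ->.
have := polar_emb sV E2 ik yK; rewrite row_emb eqxx => ->.
by rewrite addr0.
Qed.

Hypothesis n2 : (2 < n)%N.

Lemma Ksub V j k : sing V -> (\dim V * 2 = n * m)%N -> (K V j <= K V k)%VS.
Proof.
move=> sV dV; case: (eqVneq j k) => [-> | jk]; first exact: subvv.
have [i /andP [ij ik]] := third n2 j k.
have ji : j != i by rewrite eq_sym.
have ki : k != i by rewrite eq_sym.
have o := orth_dim nd (orth_add sV ji ki).
have : (K V k == K V j + K V k)%VS.
  rewrite eqEdim addvSr /=.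
  apply: arith4 o (Kbig i n2 sV dV) (Kbig k n2 sV dV).
by move=> /eqP ->; apply: addvSl.
Qed.
End Main.

Lemma arith5 (s a mm : nat) : (s + a <= mm)%N -> (a * 2 = mm)%N -> (s <= a)%N.
Proof. lia. Qed.
Lemma arith6 (a b mm : nat) : (a + b <= mm)%N -> (mm <= a * 2)%N -> (mm <= b * 2)%N ->
  (a * 2 = mm)%N.
Proof. lia. Qed.

Unset Implicit Arguments.
Set Strict Implicit.

Theorem lemma12 (F : fieldType) (n m : nat) (B : 'M[F]_m)
  (V : {vspace 'M[F]_(n, m)}) :
  (1 < n)%N ->
  symplectic B ->
  (forall A : 'M[F]_(n, m), A \in V -> totally_singular B A) ->
  (\dim V * 2 <= n * m)%N /\
  ((2 < n)%N -> (\dim V * 2 = n * m)%N ->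
   exists L : 'M[F]_m, lagrangian B L /\
     (forall A : 'M[F]_(n, m), A \in V <-> (A <= L)%MS)).
Proof.
move=> n1 [_ nd] hV.
have sV : sing B V by move=> A AV p q; apply: (hV A AV); exact: row_sub.
split.
  have c : #|[set: 'I_n]| = (n - 2).+2 by rewrite cardsT card_ord; lia.
  have pV : supp [set: 'I_n] V by move=> A _ k; rewrite inE.
  by have := G nd c sV pV; rewrite cardsT card_ord.
move=> n2 dV.
pose i0 : 'I_n := Ordinal (ltnW n1).
have [i1 /andP [i10 _]] := third n2 i0 i0.
have KS : forall j k, (K V j <= K V k)%VS.
  by move=> j k; apply: (Ksub nd n2 j k sV dV).
pose KK := K V i0.
have dK : (\dim KK * 2 = m)%N.
  have i01 : i0 != i1 by rewrite eq_sym.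
  apply: arith6 (orth_dim nd (orthK sV i01)) (Kbig nd i0 n2 sV dV) (Kbig nd i1 n2 sV dV).
pose L := <<vmat KK>>%MS.
have memL x : (x <= L)%MS = (x \in KK).
  by rewrite genmxE; apply/idP/idP => [/vmat_sub|/vmat_mem].
have orthKK : forall x y, x \in KK -> y \in KK -> bform B x y = 0.
  move=> x y xK yK.
  have y1 : y \in K V i1 by apply: (subvP (KS i0 i1)).
  have E : emb i0 x \in V by rewrite -memK.
  by have := polar_emb sV E i10 y1; rewrite row_emb eqxx.
exists L; split.
  split; first by move=> x y; rewrite !memL; apply: orthKK.
  by rewrite genmxE vmat_rank.
move=> A; split.
  move=> AV; apply/row_subP => i; rewrite memL.
  have [j /andP [ji _]] := third n2 i i.
  pose a := row i A.
  have o : orthb B (KK + <[a]>)%VS KK.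
    move=> _ y /memv_addP [x1 x1K [x2 /vlineP [c ->] ->]] yK.
    rewrite bformDl bformZl orthKK //.
    have yj : y \in K V j by apply: (subvP (KS i0 j)).
    by rewrite (polar_emb sV AV ji yj) mulr0 addr0.
  have : (KK == KK + <[a]>)%VS.
    by rewrite eqEdim addvSl /=; apply: arith5 (orth_dim nd o) dK.
  move/eqP ->; apply: (subvP (addvSr _ _)); exact: memv_line.
move=> /row_subP H; rewrite (sum_emb A); apply: memv_suml => i _.
rewrite -memK; apply: (subvP (KS i0 i)); rewrite -memL; exact: H.
Qed.
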